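(* Let $R$ be a finite set of $n$ robots, with coordination space $\chi=\mathbb{R}^n$, obstacle region, dynamics, brake-safe set $B_G$ and control law $g^G$ as described in the context, where $G$ is any directed graph on vertex set $R$. Let $s\in B_G$ and let $\mathbf u\in\mathbf U$ be a control satisfying, componentwise, $$\forall k\in\mathbb{N},\quad \mathbf u(k)\le g^G(\Phi(k,s,\mathbf u)).$$ Then $\Phi(k,s,\mathbf u)\in B_G$ for all $k\in\mathbb{N}$, and $\pi_x(\Phi(t,s,\mathbf u))\in\chi^{\mathrm{free}}_G$ for all $t\ge0$.
   Context: Robots $i\in R$ move along fixed paths; $x_i\in\mathbb{R}$ is the curvilinear coordinate of robot $i$, $x=(x_i)_{i\in R}\in\chi:=\mathbb{R}^n$, and $\{\mathbf e_i\}$ is the canonical basis of $\chi$. For each unordered pair $\{i,j\}$, $\chi^{\mathrm{obs}}_{ij}\subset\chi$ (configurations where $i$ and $j$ collide) is an open cylinder of the form $C_{ij}+\mathrm{span}\{\mathbf e_k:k\ne i,j\}$ where $C_{ij}$ is an open bounded convex subset of $\mathrm{span}\{\mathbf e_i,\mathbf e_j\}$ (possibly empty); $\chi^{\mathrm{obs}}=\bigcup_{\{i,j\}}\chi^{\mathrm{obs}}_{ij}$. For $i\neq j$ define $\chi^{\mathrm{obs}}_{i\succ j}:=\chi^{\mathrm{obs}}_{ij}-\mathbb{R}_+\mathbf e_i+\mathbb{R}_+\mathbf e_j$ (Minkowski sum). A priority graph is a directed graph $G$ with vertex set $R$ and edge set $E(G)$; an edge $(i,j)$ means $i$ has priority over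 $j$. Set $\chi^{\mathrm{obs}}_G:=\bigcup_{(i,j)\in E(G)}\chi^{\mathrm{obs}}_{i\succ j}$, $\chi^{\mathrm{free}}_G:=\chi\setminus\chi^{\mathrm{obs}}_G$. Dynamics: robot $i$ has state $s_i=(x_i,v_i)\in S_i:=\mathbb{R}\times[0,\overline v_i]$ with speed limit $\overline v_i\ge 0$, and $\dot x_i=v_i$, $\dot v_i=\mathbf u_i(t)\,\delta(\mathbf u_i(t),v_i(t))$, where $\delta(u,v)=0$ if ($v=0$ and $u<0$) or ($v=\overline v_i$ and $u>0$), and $\delta=1$ otherwise. Controls take values in $U_i=[\underline u_i,\overline u_i]$ with $\underline u_i<0<\overline u_i$ and are piecewise constant on each slot $[k,k+1)$, $k\in\mathbb{N}$; $\mathbf U_i$ is the set of such controls, $\mathbf U=\prod_i\mathbf U_i$, $S=\prod_i S_i$, $U=\prod_i U_i$. $\Phi_i(t,s_i,\mathbf u_i)$ is the resulting flow of robot $i$ from $s_i$, and $\Phi(t,s,\mathbf u)=(\Phi_i(t,s_i,\mathbf u_i))_i$. $\underline{\mathbf u}$ denotes the constant control equal to $(\underline u_i)_i$. $\pi_x(s)=x$. Brake-safe states: $B_G:=\{s\in S:\ \pi_x(\Phi(t,s,\underline{\mathbf u}))\in\chi^{\mathrm{free}}_G\ \forall t\ge0\}$. Impulse control: $\mathbf u_i^{\mathrm{impulse}}(t)=\overline u_i$ for $t\in[0,1)$ and $=\underline u_i$ for $t\ge1$. Worst-case control w.r.t. $i$: $\tilde{\mathbf u}^i$ with $\tilde{\mathbf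 u}^i_i=\mathbf u_i^{\mathrm{impulse}}$ and $\tilde{\mathbf u}^i_j$ the constant control $\underline u_j$ for $j\ne i$. Control law $g^G:S\to U$: $g^G_i(s)=\underline u_i$ if there exists $(j,i)\in E(G)$ and $t\ge0$ with $\pi_x(\Phi(t,s,\tilde{\mathbf u}^i))\in\chi^{\mathrm{obs}}_{j\succ i}$; otherwise $g^G_i(s)=\overline u_i$. *)

(* Defs.v *)
From Stdlib Require Import Reals Lra ZArith ClassicalDescription.
From Coquelicot Require Import Coquelicot.
Open Scope R_scope.

(* Robots are the indices 0..n-1 (nat, i < n).  Coordinates / states / controls
   are functions on nat; only indices i < n are meaningful. *)

(* C i j a b : (x_i, x_j) = (a, b) lies in the 2D collision set C_ij. *)
Definition obs_ij (C : nat -> nat -> R -> R -> Prop) (i j : nat) (x : nat -> R) : Prop :=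
  C i j (x i) (x j).

(* chi^obs_{i > j} = chi^obs_ij - R_+ e_i + R_+ e_j  (Minkowski sum) *)
Definition obs_succ (C : nat -> nat -> R -> R -> Prop) (i j : nat) (x : nat -> R) : Prop :=
  exists a b : R, 0 <= a /\ 0 <= b /\
    obs_ij C i j (fun k => if Nat.eqb k i then x k + a
                           else if Nat.eqb k j then x k - b else x k).

(* a priority graph on {0..n-1}: edge relation E; self loops are ignored *)
Definition obs_G (n : nat) (C : nat -> nat -> R -> R -> Prop) (E : nat -> nat -> Prop)
  (x : nat -> R) : Prop :=
  exists i j, (i < n)%nat /\ (j < n)%nat /\ i <> j /\ E i j /\ obs_succ C i j x.

Definition free_G n C E (x : nat -> R) : Prop := ~ obs_G n C E x.

Definition open2 (A : R -> R -> Prop) : Prop :=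
  forall a b, A a b -> exists eps, 0 < eps /\
    forall a' b', Rabs (a' - a) < eps -> Rabs (b' - b) < eps -> A a' b'.
Definition bounded2 (A : R -> R -> Prop) : Prop :=
  exists M, forall a b, A a b -> Rabs a <= M /\ Rabs b <= M.
Definition convex2 (A : R -> R -> Prop) : Prop :=
  forall a b a' b' l, A a b -> A a' b' -> 0 <= l <= 1 ->
    A (l * a + (1 - l) * a') (l * b + (1 - l) * b').

Definition clamp (vm y : R) : R := Rmax 0 (Rmin vm y).

(* Flow of one robot on one slot with constant control u, for duration tau in [0,1],
   starting from (x, v) with v in [0, vm]: the solution of
   x' = v, v' = u * delta(u, v), i.e. v saturates at 0 and vm. *)
Definition step1 (vm : R) (p : R * R) (u tau : R) : R * R :=
  (fst p + RInt (fun r => clamp vm (snd p + u * r)) 0 tau, clamp vm (snd p + u * tau)).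

Fixpoint flow_nat (vm : R) (p : R * R) (u : nat -> R) (k : nat) : R * R :=
  match k with
  | O => p
  | S k' => step1 vm (flow_nat vm p u k') (u k') 1
  end.

Definition floor_nat (t : R) : nat := Z.to_nat (Int_part t).

(* Phi_i(t, s_i, u_i) for t >= 0; a control is the sequence of its slot values. *)
Definition flow1 (vm : R) (p : R * R) (u : nat -> R) (t : R) : R * R :=
  let k := floor_nat t in step1 vm (flow_nat vm p u k) (u k) (t - INR k).

(* state: s i = (x_i, v_i); control: u i k = value of u_i on [k, k+1) *)
Definition Phi (vmax : nat -> R) (t : R) (s : nat -> R * R) (u : nat -> nat -> R)
  : nat -> R * R := fun i => flow1 (vmax i) (s i) (u i) t.

Definition pi_x (s : nat -> R * R) : nat -> R := fun i => fst (s i).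

Definition in_S (n : nat) (vmax : nat -> R) (s : nat -> R * R) : Prop :=
  forall i, (i < n)%nat -> 0 <= snd (s i) <= vmax i.

Definition in_U (n : nat) (ulo uhi : nat -> R) (u : nat -> nat -> R) : Prop :=
  forall i k, (i < n)%nat -> ulo i <= u i k <= uhi i.

Definition ubrake (ulo : nat -> R) : nat -> nat -> R := fun i _ => ulo i.
Definition uimpulse (ulo uhi : nat -> R) (i : nat) : nat -> R :=
  fun k => match k with O => uhi i | _ => ulo i end.
Definition uworst (ulo uhi : nat -> R) (i : nat) : nat -> nat -> R :=
  fun j => if Nat.eqb j i then uimpulse ulo uhi j else (fun _ => ulo j).

Definition brake_safe n C E vmax ulo (s : nat -> R * R) : Prop :=
  in_S n vmax s /\
  forall t, 0 <= t -> free_G n C E (pi_x (Phi vmax t s (ubrake ulo))).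

Definition danger n C (E : nat -> nat -> Prop) vmax ulo uhi (s : nat -> R * R) (i : nat) : Prop :=
  exists j, (j < n)%nat /\ j <> i /\ E j i /\
    exists t, 0 <= t /\ obs_succ C j i (pi_x (Phi vmax t s (uworst ulo uhi i))).

Definition gG n C E vmax ulo uhi (s : nat -> R * R) (i : nat) : R :=
  if excluded_middle_informative (danger n C E vmax ulo uhi s i) then ulo i else uhi i.

(* Main.v *)
Require Import Defs.
From Stdlib Require Import Reals Lra Lia ZArith FunctionalExtensionality ClassicalDescription.
From Coquelicot Require Import Coquelicot.
Open Scope R_scope.

Lemma lip_cont (f : R -> R) (K : R) x : 0 <= K ->
  (forall a b, Rabs (f a - f b) <= K * Rabs (a - b)) -> continuous f x.
Proof.
  intros HK H. apply filterlim_locally. intros eps.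
  assert (Hd : 0 < eps / (K+1)) by (apply Rdiv_lt_0_compat; [apply cond_pos|lra]).
  exists (mkposreal _ Hd). intros y Hy.
  unfold ball in *; simpl in *; unfold AbsRing_ball in *; simpl in *.
  unfold abs, minus, plus, opp in *; simpl in *.
  eapply Rle_lt_trans; [apply H|].
  pose proof (Rabs_pos (y + - x)).
  apply Rle_lt_trans with ((K+1) * Rabs (y + - x)).
  - unfold Rminus. nra.
  - apply Rlt_le_trans with ((K+1) * (eps/(K+1))).
    + apply Rmult_lt_compat_l; lra.
    + right; field; lra.
Qed.

Lemma clamp_lip vm a b : Rabs (clamp vm a - clamp vm b) <= Rabs (a - b).
Proof.
  unfold clamp, Rmax, Rmin; repeat destruct Rle_dec; unfold Rabs;
  repeat destruct Rcase_abs; lra.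
Qed.

Lemma clamp_mono vm a b : a <= b -> clamp vm a <= clamp vm b.
Proof. unfold clamp, Rmax, Rmin; repeat destruct Rle_dec; lra. Qed.

Lemma clamp_id vm a : 0 <= a <= vm -> clamp vm a = a.
Proof. unfold clamp, Rmax, Rmin; repeat destruct Rle_dec; lra. Qed.

Lemma clamp_range vm a : 0 <= vm -> 0 <= clamp vm a <= vm.
Proof. unfold clamp, Rmax, Rmin; repeat destruct Rle_dec; lra. Qed.

Lemma ex_int vm v c a b : ex_RInt (fun r => clamp vm (v + c*r)) a b.
Proof.
  apply (@ex_RInt_continuous R_CompleteNormedModule); intros. apply lip_cont with (Rabs c); [apply Rabs_pos|].
  intros a0 b0. eapply Rle_trans; [apply clamp_lip|].
  rewrite <- Rabs_mult; right; f_equal; ring.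
Qed.

Lemma step1_mono vm p p' c c' tau :
  fst p <= fst p' -> snd p <= snd p' -> c <= c' -> 0 <= tau ->
  fst (step1 vm p c tau) <= fst (step1 vm p' c' tau) /\
  snd (step1 vm p c tau) <= snd (step1 vm p' c' tau).
Proof.
  intros H1 H2 H3 H4. unfold step1; simpl; split.
  - apply Rplus_le_compat; auto. apply RInt_le; auto using ex_int.
    intros r Hr. apply clamp_mono. nra.
  - apply clamp_mono; nra.
Qed.

Lemma flow_nat_mono vm p p' c c' k :
  fst p <= fst p' -> snd p <= snd p' -> (forall m, c m <= c' m) ->
  fst (flow_nat vm p c k) <= fst (flow_nat vm p' c' k) /\
  snd (flow_nat vm p c k) <= snd (flow_nat vm p' c' k).
Proof.
  intros H1 H2 H3. induction k as [|k IH]; simpl; auto.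
  destruct IH. apply step1_mono; auto; lra.
Qed.

Lemma floor_spec t : 0 <= t -> INR (floor_nat t) <= t < INR (floor_nat t) + 1.
Proof.
  intros Ht. unfold floor_nat. destruct (base_Int_part t) as [H1 H2].
  assert (Hz : (0 <= Int_part t)%Z).
  { destruct (Z_le_gt_dec 0 (Int_part t)); auto.
    assert (IZR (Int_part t) <= -1) by (apply IZR_le; lia). lra. }
  rewrite INR_IZR_INZ, Z2Nat.id by exact Hz. lra.
Qed.

Lemma floor_char t k : INR k <= t < INR k + 1 -> floor_nat t = k.
Proof.
  intros [H1 H2]. unfold floor_nat, Int_part.
  assert (Hu : (Z.of_nat k + 1)%Z = up t).
  { apply tech_up; rewrite plus_IZR, <- INR_IZR_INZ; lra. }
  rewrite <- Hu. rewrite Z.add_simpl_r. apply Nat2Z.id.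
Qed.

Lemma step1_zero vm p c : 0 <= snd p <= vm -> step1 vm p c 0 = p.
Proof.
  intros H. destruct p as [x v]. unfold step1; simpl in *. rewrite RInt_point.
  rewrite Rmult_0_r, (clamp_id vm (v+0)) by lra.
  unfold zero; simpl. f_equal; ring.
Qed.

Lemma flow_nat_range vm p c k : 0 <= vm -> 0 <= snd p <= vm ->
  0 <= snd (flow_nat vm p c k) <= vm.
Proof.
  intros H0 H. destruct k; simpl; auto. unfold step1; simpl. apply clamp_range; auto.
Qed.

Lemma flow_nat_shift vm p c k :
  flow_nat vm p c (S k) = flow_nat vm (step1 vm p (c 0%nat) 1) (fun m => c (S m)) k.
Proof.
  induction k as [|k IH]; simpl; auto.
  simpl in IH. rewrite IH. reflexivity.
Qed.

Lemma flow1_shift vm p c t : 0 <= t ->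
  flow1 vm p c (1 + t) = flow1 vm (step1 vm p (c 0%nat) 1) (fun m => c (S m)) t.
Proof.
  intros Ht. unfold flow1; cbv zeta.
  pose proof (floor_spec t Ht) as Hs.
  assert (Hf : floor_nat (1 + t) = S (floor_nat t)).
  { apply floor_char. rewrite S_INR. lra. }
  rewrite Hf. rewrite <- flow_nat_shift. f_equal. rewrite S_INR; ring.
Qed.

Lemma flow1_first vm p c tau : 0 <= tau < 1 ->
  flow1 vm p c tau = step1 vm p (c 0%nat) tau.
Proof.
  intros H. unfold flow1; cbv zeta.
  assert (Hf : floor_nat tau = 0%nat) by (apply floor_char; simpl; lra).
  rewrite Hf. simpl. f_equal. ring.
Qed.

Lemma flow1_mono vm p p' c c' t : 0 <= t ->
  fst p <= fst p' -> snd p <= snd p' -> (forall m, c m <= c' m) ->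
  fst (flow1 vm p c t) <= fst (flow1 vm p' c' t).
Proof.
  intros Ht H1 H2 H3. unfold flow1; cbv zeta.
  pose proof (floor_spec t Ht).
  destruct (flow_nat_mono vm p p' c c' (floor_nat t) H1 H2 H3).
  apply step1_mono; auto; lra.
Qed.

Lemma obs_succ_mono C i j x x' : i <> j ->
  obs_succ C i j x -> x' i <= x i -> x j <= x' j -> obs_succ C i j x'.
Proof.
  intros Hij [a [b [Ha [Hb H]]]] H1 H2.
  unfold obs_ij in *. rewrite !Nat.eqb_refl in *.
  assert (Hji : Nat.eqb j i = false) by (apply Nat.eqb_neq; auto).
  rewrite Hji in *.
  exists (a + (x i - x' i)), (b + (x' j - x j)). split; [lra|split; [lra|]].
  unfold obs_ij. rewrite !Nat.eqb_refl, Hji.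
  replace (x' i + (a + (x i - x' i))) with (x i + a) by ring.
  replace (x' j - (b + (x' j - x j))) with (x j - b) by ring. exact H.
Qed.

Lemma free_ext n C E x x' : (forall i, (i < n)%nat -> x i = x' i) ->
  free_G n C E x -> free_G n C E x'.
Proof.
  intros Heq Hf [i [j [Hi [Hj [Hij [He Ho]]]]]]. apply Hf.
  exists i, j. repeat split; auto.
  apply obs_succ_mono with x'; auto; rewrite Heq; auto; lra.
Qed.

Lemma Phi_app vm t (s : nat -> R * R) c i : Phi vm t s c i = flow1 (vm i) (s i) (c i) t.
Proof. reflexivity. Qed.

Theorem theorem2
  (n : nat) (C : nat -> nat -> R -> R -> Prop)
  (vmax ulo uhi : nat -> R) (E : nat -> nat -> Prop)
  (HCsym : forall i j a b, C i j a b <-> C j i b a)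
  (HCopen : forall i j, (i < n)%nat -> (j < n)%nat -> i <> j -> open2 (C i j))
  (HCbdd : forall i j, (i < n)%nat -> (j < n)%nat -> i <> j -> bounded2 (C i j))
  (HCcvx : forall i j, (i < n)%nat -> (j < n)%nat -> i <> j -> convex2 (C i j))
  (Hvmax : forall i, (i < n)%nat -> 0 <= vmax i)
  (Hulo : forall i, (i < n)%nat -> ulo i < 0)
  (Huhi : forall i, (i < n)%nat -> 0 < uhi i)
  (s : nat -> R * R) (u : nat -> nat -> R)
  (Hs : brake_safe n C E vmax ulo s)
  (Hu : in_U n ulo uhi u)
  (Hg : forall (k : nat) i, (i < n)%nat ->
          u i k <= gG n C E vmax ulo uhi (Phi vmax (INR k) s u) i) :
  (forall k : nat, brake_safe n C E vmax ulo (Phi vmax (INR k) s u)) /\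
  (forall t, 0 <= t -> free_G n C E (pi_x (Phi vmax t s u))).
Proof.
  set (F := fun k i => flow_nat (vmax i) (s i) (u i) k).
  set (c' := fun k i m => match m with O => u i k | _ => ulo i end).
  set (Y := fun k tau i => flow1 (vmax i) (F k i) (c' k i) tau).
  destruct Hs as [HsS HsF].
  assert (HF : forall k i, (i < n)%nat -> 0 <= snd (F k i) <= vmax i).
  { intros k i Hi. apply flow_nat_range; auto. }
  assert (HPhi : forall k i, (i < n)%nat -> Phi vmax (INR k) s u i = F k i).
  { intros k i Hi. unfold Phi, flow1; cbv zeta.
    rewrite (floor_char (INR k) k) by lra. rewrite Rminus_diag.
    apply step1_zero. apply HF; auto. }
  assert (Hslot : forall k, brake_safe n C E vmax ulo (Phi vmax (INR k) s u) ->
            forall tau, 0 <= tau -> free_G n C E (fun i => fst (Y k tau i))).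
  { intros k [_ Hbk] tau Htau [i [j [Hi [Hj [Hij [Eij Hobs]]]]]].
    pose proof (HPhi k) as HPk. pose proof (Hg k) as Hgk.
    set (sk := Phi vmax (INR k) s u) in *. clear HPhi.
    assert (Hcl : forall m, ulo i <= c' k i m).
    { intros [|m]; simpl; [apply Hu; auto|lra]. }
    assert (HYi : fst (flow1 (vmax i) (F k i) (fun _ => ulo i) tau) <= fst (Y k tau i)).
    { apply flow1_mono; auto; lra. }
    pose proof (Hgk j Hj) as Hgj. unfold gG in Hgj.
    destruct (excluded_middle_informative
                (danger n C E vmax ulo uhi sk j)) as [Hd|Hnd].
    - assert (Huj : u j k = ulo j) by (pose proof (Hu j k Hj); lra).
      apply (Hbk tau Htau). exists i, j. repeat split; auto.
      apply obs_succ_mono with (fun i => fst (Y k tau i)); auto.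
      + unfold pi_x, Phi, ubrake. rewrite HPk by auto. exact HYi.
      + unfold pi_x, Phi, ubrake. rewrite HPk by auto. unfold Y.
        assert (Hc : c' k j = fun _ => ulo j).
        { apply functional_extensionality; intros [|m]; simpl; auto. }
        rewrite Hc. lra.
    - apply Hnd. exists i. split; auto. split; auto. split; auto.
      exists tau. split; auto.
      apply obs_succ_mono with (fun i => fst (Y k tau i)); auto.
      + unfold pi_x, Phi, uworst. rewrite HPk by auto.
        assert (Hne : Nat.eqb i j = false) by (apply Nat.eqb_neq; auto).
        rewrite Hne. exact HYi.
      + unfold pi_x, Phi, uworst. rewrite HPk by auto. rewrite Nat.eqb_refl.
        apply flow1_mono; auto; try lra.
        intros [|m]; simpl; [apply Hu; auto|lra]. }
  assert (Hall : forall k, brake_safe n C E vmax ulo (Phi vmax (INR k) s u)).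
  { induction k as [|k IH].
    - split.
      + intros i Hi. rewrite HPhi by auto. apply HF; auto.
      + intros t Ht. apply free_ext with (pi_x (Phi vmax t s (ubrake ulo))); auto.
        intros i Hi. unfold pi_x. rewrite !(Phi_app vmax t), HPhi by auto. reflexivity.
    - split.
      + intros i Hi. rewrite HPhi by auto. apply HF; auto.
      + intros t Ht. apply free_ext with (fun i => fst (Y k (1 + t) i)).
        * intros i Hi. unfold pi_x, Y. rewrite (Phi_app vmax t), HPhi by auto.
          rewrite flow1_shift by auto. reflexivity.
        * apply Hslot; auto; lra. }
  split; auto.
  intros t Ht. pose proof (floor_spec t Ht) as Hfs.
  set (k := floor_nat t) in *.
  apply free_ext with (fun i => fst (Y k (t - INR k) i)).
  - intros i Hi. unfold pi_x, Phi, Y. rewrite flow1_first by lra.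
    unfold flow1; cbv zeta. fold k. reflexivity.
  - apply Hslot; auto; lra.
Qed.
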